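(* Let $k$ be an odd positive integer. Then $$\sum_{n=1}^{k}\frac{\cos^2(\pi n/k)}{\cos^4(2\pi n/k)}=\begin{cases}\dfrac{k}{12}\,(3+4k+3k^2+2k^3), & k\equiv 1 \pmod 4,\\[2mm] \dfrac{k}{12}\,(-3+4k-3k^2+2k^3), & k\equiv 3 \pmod 4.\end{cases}$$ *)

(* Defs.v *)
From Stdlib Require Export Reals Lra Lia.

(* Main.v *)
Require Import Defs.
From Stdlib Require Import ZArith.
Open Scope R_scope.

Definition th (k n : nat) : R := 2*PI*INR n / INR k.
Definition F (k m r : nat) : R :=
  sum_f_R0 (fun i => cos (INR r * th k (S i)) / cos (th k (S i)) ^ m) (pred k).

Lemma Kpos k : Nat.Odd k -> 0 < INR k.
Proof. intros [q ->]. apply lt_0_INR. lia. Qed.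

Lemma cos_th_nz k n : Nat.Odd k -> cos (th k n) <> 0.
Proof.
  intros Hk H. pose proof (Kpos k Hk) as Kp. destruct Hk as [q Hq].
  apply cos_eq_0_0 in H as [z Hz]. unfold th in Hz.
  assert (E : PI * (4*INR n) = PI * ((2*IZR z + 1) * INR k)).
  { assert (2*PI*INR n = (IZR z*PI + PI/2) * INR k) by (rewrite <- Hz; field; lra).
    lra. }
  apply Rmult_eq_reg_l in E; [|pose proof PI_RGT_0; lra].
  rewrite Hq in E. rewrite !INR_IZR_INZ in E.
  replace 4 with (IZR 4) in E by reflexivity.
  replace 2 with (IZR 2) in E by reflexivity.
  replace 1 with (IZR 1) in E by reflexivity.
  rewrite <- !mult_IZR, <- !plus_IZR, <- mult_IZR in E.
  apply eq_IZR in E. rewrite Nat2Z.inj_add, Nat2Z.inj_mul in E.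
  change (Z.of_nat 2) with 2%Z in E. change (Z.of_nat 1) with 1%Z in E.
  assert (E2 : (4 * Z.of_nat n = 2 * (2 * z * Z.of_nat q + z + Z.of_nat q) + 1)%Z) by (rewrite E; ring).
  lia.
Qed.

Lemma tele (g : nat -> R) N : sum_f_R0 (fun i => g (S i) - g i) N = g (S N) - g O.
Proof. induction N; simpl; [ring | rewrite IHN; ring]. Qed.

Lemma sum_one N : sum_f_R0 (fun _ => 1) N = INR (S N).
Proof. induction N; [simpl; ring| rewrite tech5, IHN, (S_INR (S N)); ring]. Qed.

Lemma cos_k_th k n : Nat.Odd k -> cos (INR k * th k n) = 1.
Proof.
  intros Hk. pose proof (Kpos k Hk). unfold th.
  replace (INR k * (2 * PI * INR n / INR k)) with (0 + 2 * INR n * PI) by (field; lra).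
  rewrite cos_period. apply cos_0.
Qed.

Lemma F_k k m : Nat.Odd k -> F k m k = F k m 0.
Proof.
  intros Hk. unfold F. apply sum_eq. intros i _.
  rewrite cos_k_th by auto. rewrite Rmult_0_l, cos_0. reflexivity.
Qed.

Lemma F0_0 k : Nat.Odd k -> F k 0 0 = INR k.
Proof.
  intros Hk. unfold F. replace (INR k) with (INR (S (pred k))).
  - rewrite <- (sum_one (pred k)).
    apply sum_eq. intros i _. rewrite Rmult_0_l, cos_0. simpl. field.
  - f_equal. destruct Hk as [q ->]. lia.
Qed.

Lemma F0_mid k r : Nat.Odd k -> (0 < r < k)%nat -> F k 0 r = 0.
Proof.
  intros Hk Hr. pose proof (Kpos k Hk) as Kp.
  set (x := 2 * PI * INR r / INR k).
  assert (Hs : 0 < sin (x / 2)).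
  { apply sin_gt_0; unfold x.
    - assert (0 < INR r) by (apply lt_0_INR; lia). pose proof PI_RGT_0.
      apply Rmult_lt_0_compat; [|lra]. apply Rdiv_lt_0_compat; nra.
    - assert (INR r < INR k) by (apply lt_INR; lia). pose proof PI_RGT_0.
      apply (Rmult_lt_reg_r (INR k)); [lra|].
      replace (2 * PI * INR r / INR k / 2 * INR k) with (PI * INR r) by (field; lra).
      nra. }
  set (g := fun j : nat => sin ((INR j + /2) * x)).
  assert (H : 2 * sin (x/2) * F k 0 r = g (S (pred k)) - g O).
  { rewrite <- tele. unfold F. rewrite scal_sum. apply sum_eq. intros i _.
    unfold g. rewrite !S_INR.
    replace (INR r * th k (S i)) with ((INR i + 1) * x) by (unfold th, x; rewrite S_INR; field; lra).
    set (y := (INR i + 1) * x).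
    replace ((INR i + 1 + / 2) * x) with (y + x/2) by (unfold y; field).
    replace ((INR i + / 2) * x) with (y - x/2) by (unfold y; field).
    rewrite sin_plus, sin_minus. simpl pow. field. }
  assert (Hg : g (S (pred k)) = g O).
  { unfold g. replace (S (pred k)) with k by (destruct Hk as [q ->]; lia).
    replace ((INR k + / 2) * x) with (x/2 + 2 * INR r * PI) by (unfold x; field; lra).
    rewrite sin_period. simpl INR. f_equal. field. }
  rewrite Hg in H. apply (Rmult_eq_reg_l (2 * sin (x/2))); [|lra]. lra.
Qed.

Lemma F_rec k m r : Nat.Odd k ->
  F k (S m) (S (S r)) + F k (S m) r = 2 * F k m (S r).
Proof.
  intros Hk. unfold F. rewrite <- plus_sum, scal_sum. apply sum_eq. intros i _.
  set (t := th k (S i)). assert (Hc : cos t <> 0) by apply cos_th_nz, Hk.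
  assert (Hcm : cos t ^ m <> 0) by (apply pow_nonzero; auto).
  rewrite !S_INR.
  replace ((INR r + 1 + 1) * t) with ((INR r + 1) * t + t) by ring.
  replace (INR r * t) with ((INR r + 1) * t - t) by ring.
  rewrite cos_plus, cos_minus. simpl pow. field. auto.
Qed.

Lemma F_1 k m : Nat.Odd k -> F k (S m) 1 = F k m 0.
Proof.
  intros Hk. unfold F. apply sum_eq. intros i _.
  set (t := th k (S i)). assert (Hc : cos t <> 0) by apply cos_th_nz, Hk.
  assert (Hcm : cos t ^ m <> 0) by (apply pow_nonzero; auto).
  simpl INR. rewrite Rmult_1_l, Rmult_0_l, cos_0. simpl pow. field. auto.
Qed.

Definition Phi (A B : R -> R) (r : nat) : R :=
  cos (INR r * PI / 2) * A (INR r) + sin (INR r * PI / 2) * B (INR r).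

Lemma Phi_SS A B r : Phi A B (S (S r)) =
  - (cos (INR r * PI / 2) * A (INR r + 2) + sin (INR r * PI / 2) * B (INR r + 2)).
Proof.
  unfold Phi. rewrite !S_INR.
  replace ((INR r + 1 + 1) * PI / 2) with (INR r * PI / 2 + PI) by field.
  rewrite neg_cos, neg_sin. replace (INR r + 1 + 1) with (INR r + 2) by ring. ring.
Qed.

Lemma Phi_S A B r : Phi A B (S r) =
  - sin (INR r * PI / 2) * A (INR r + 1) + cos (INR r * PI / 2) * B (INR r + 1).
Proof.
  unfold Phi. rewrite !S_INR.
  replace ((INR r + 1) * PI / 2) with (INR r * PI / 2 + PI / 2) by field.
  rewrite cos_plus, sin_plus, cos_PI2, sin_PI2. ring.
Qed.

Lemma Phi_0 A B : Phi A B 0 = A 0.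
Proof. unfold Phi. simpl INR. replace (0 * PI / 2) with 0 by field. rewrite cos_0, sin_0. ring. Qed.

Lemma Phi_1 A B : Phi A B 1 = B 1.
Proof. unfold Phi. simpl INR. replace (1 * PI / 2) with (PI/2) by field. rewrite cos_PI2, sin_PI2. ring. Qed.

Lemma uniq k (D : nat -> R) : Nat.Odd k ->
  (forall r, (S (S r) <= k)%nat -> D (S (S r)) + D r = 0) ->
  D 1%nat = 0 -> D k = D O -> forall r, (r <= k)%nat -> D r = 0.
Proof.
  intros [q Hq] Hrec H1 Hk.
  assert (Hodd : forall j, (2*j+1 <= k)%nat -> D (2*j+1)%nat = 0).
  { induction j; intros Hj; [exact H1|].
    replace (2 * S j + 1)%nat with (S (S (2*j+1))) by lia.
    pose proof (Hrec (2*j+1)%nat ltac:(lia)). rewrite IHj in H by lia. lra. }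
  assert (H0 : D O = 0) by (rewrite <- Hk, Hq; apply Hodd; lia).
  assert (Hev : forall j, (2*j <= k)%nat -> D (2*j)%nat = 0).
  { induction j; intros Hj; [exact H0|].
    replace (2 * S j)%nat with (S (S (2*j))) by lia.
    pose proof (Hrec (2*j)%nat ltac:(lia)). rewrite IHj in H by lia. lra. }
  intros r Hr. destruct (Nat.Even_or_Odd r) as [[j ->]|[j ->]].
  - apply Hev; lia.
  - apply Hodd; lia.
Qed.

Lemma step k m A B A' B' e : Nat.Odd k ->
  cos (INR k * PI / 2) = 0 -> sin (INR k * PI / 2) = e ->
  (forall r, (r <= k)%nat -> F k m r = Phi A' B' r) ->
  (forall x, A x - A (x + 2) = 2 * B' (x + 1)) ->
  (forall x, B x - B (x + 2) = -2 * A' (x + 1)) ->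
  B 1 = A' 0 -> e * B (INR k) = A 0 ->
  forall r, (r <= k)%nat -> F k (S m) r = Phi A B r.
Proof.
  intros Hk Hc Hs Hprev HA HB H1 Hper.
  intros r Hr. apply Rminus_diag_uniq. revert r Hr.
  apply (uniq k (fun r => F k (S m) r - Phi A B r) Hk).
  - intros r Hr.
    assert (E : F k (S m) (S (S r)) + F k (S m) r = 2 * Phi A' B' (S r))
      by (rewrite F_rec, Hprev by (auto; lia); reflexivity).
    rewrite Phi_S in E. rewrite Phi_SS. unfold Phi.
    specialize (HA (INR r)). specialize (HB (INR r)).
    replace (A (INR r + 2)) with (A (INR r) - 2 * B' (INR r + 1)) by lra.
    replace (B (INR r + 2)) with (B (INR r) + 2 * A' (INR r + 1)) by lra.
    lra.
  - rewrite F_1, Hprev, Phi_0, Phi_1 by (auto; lia). lra.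
  - rewrite F_k by auto. unfold Phi at 1. rewrite Hc, Hs, Hper, Phi_0. ring.
Qed.

Lemma base1 k e : Nat.Odd k ->
  cos (INR k * PI / 2) = 0 -> sin (INR k * PI / 2) = e ->
  forall r, (r <= k)%nat -> F k 1 r = Phi (fun _ => e * INR k) (fun _ => INR k) r.
Proof.
  intros Hk Hc Hs.
  intros r Hr. apply Rminus_diag_uniq. revert r Hr.
  apply (uniq k (fun r => F k 1 r - Phi (fun _ => e * INR k) (fun _ => INR k) r) Hk).
  - intros r Hr.
    assert (E : F k 1 (S (S r)) + F k 1 r = 0)
      by (rewrite F_rec, F0_mid by (auto; lia); ring).
    rewrite Phi_SS. unfold Phi. lra.
  - rewrite F_1, F0_0, Phi_1 by auto. ring.
  - rewrite F_k by auto. unfold Phi at 1. rewrite Hc, Hs, Phi_0. ring.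
Qed.

Lemma kcase k : Nat.Odd k -> cos (INR k * PI / 2) = 0 /\
  sin (INR k * PI / 2) = (if Nat.eqb (k mod 4) 1 then 1 else -1).
Proof.
  intros Hk.
  assert (Hm : (k mod 4 = 1 \/ k mod 4 = 3)%nat).
  { destruct Hk as [q ->]. 
    pose proof (Nat.mod_upper_bound (2*q+1) 4 ltac:(lia)).
    pose proof (Nat.div_mod (2*q+1) 4 ltac:(lia)). lia. }
  pose proof (Nat.div_mod k 4 ltac:(lia)) as Hd.
  set (q := (k / 4)%nat) in Hd.
  destruct Hm as [Hm|Hm]; rewrite Hm in Hd |- *; simpl Nat.eqb; rewrite Hd.
  - replace (INR (4 * q + 1) * PI / 2) with (PI/2 + 2 * INR q * PI)
      by (rewrite plus_INR, mult_INR; simpl; field).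
    rewrite cos_period, sin_period, cos_PI2, sin_PI2. auto.
  - replace (INR (4 * q + 3) * PI / 2) with ((PI/2 + PI) + 2 * INR q * PI)
      by (rewrite plus_INR, mult_INR; simpl; field).
    rewrite cos_period, sin_period, neg_cos, neg_sin, cos_PI2, sin_PI2. split; ring.
Qed.

Theorem mainTheorem1 (k : nat) (hk : Nat.Odd k) :
  sum_f 1 k (fun n => (cos (PI * INR n / INR k))^2 / (cos (2 * PI * INR n / INR k))^4) =
  (if Nat.eqb (k mod 4) 1
   then INR k / 12 * (3 + 4 * INR k + 3 * INR k ^ 2 + 2 * INR k ^ 3)
   else INR k / 12 * (-3 + 4 * INR k - 3 * INR k ^ 2 + 2 * INR k ^ 3)).
Proof.
  pose proof (Kpos k hk) as Kp.
  destruct (kcase k hk) as [Hc Hs].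
  set (e := if Nat.eqb (k mod 4) 1 then 1 else -1) in Hs.
  assert (he : e * e = 1) by (unfold e; destruct (Nat.eqb (k mod 4) 1); ring).
  set (K := INR k).
  pose proof (base1 k e hk Hc Hs) as H1.
  pose proof (step k 1 (fun x => K^2 - K*x) (fun x => e*K*x) (fun _ => e * INR k) (fun _ => INR k) e hk Hc Hs H1
    ltac:(intros; cbv beta; unfold K; ring) ltac:(intros; cbv beta; unfold K; ring) ltac:(cbv beta; unfold K; ring)
    ltac:(cbv beta; unfold K; transitivity ((e*e)*(INR k*INR k)); [ring | rewrite he; ring])) as H2.
  pose proof (step k 2 (fun x => e*(K^3+K)/2 - e*K*x^2/2) (fun x => K^2*x - K*x^2/2 + K/2)
    (fun x => K^2 - K*x) (fun x => e*K*x) e hk Hc Hs H2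
    ltac:(intros; cbv beta; unfold K; field) ltac:(intros; cbv beta; unfold K; field) ltac:(cbv beta; unfold K; field)
    ltac:(unfold K; field)) as H3.
  pose proof (step k 3 (fun x => (2*K^4+4*K^2)/6 - K^2*x^2/2 + K*(x^3-x)/6 - K*x/2)
    (fun x => e*((K^3+K)*x/2 - K*(x^3-x)/6))
    (fun x => e*(K^3+K)/2 - e*K*x^2/2) (fun x => K^2*x - K*x^2/2 + K/2) e hk Hc Hs H3
    ltac:(intros; cbv beta; unfold K; field) ltac:(intros; cbv beta; unfold K; field) ltac:(cbv beta; unfold K; field)
    ltac:(cbv beta; unfold K;
          transitivity ((e*e) * ((INR k ^ 3 + INR k) * INR k / 2 - INR k * (INR k ^ 3 - INR k) / 6));
          [ring | rewrite he; field])) as H4.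
  assert (E : sum_f 1 k (fun n => (cos (PI * INR n / INR k))^2 / (cos (2 * PI * INR n / INR k))^4)
              = / 2 * (F k 4 0 + F k 3 0)).
  { unfold sum_f, F. rewrite <- plus_sum, scal_sum.
    replace (k - 1)%nat with (pred k) by lia.
    apply sum_eq. intros i _. replace (i + 1)%nat with (S i) by lia.
    change (2 * PI * INR (S i) / INR k) with (th k (S i)).
    set (t := th k (S i)). set (a := PI * INR (S i) / INR k).
    assert (Hct : cos t <> 0) by apply cos_th_nz, hk.
    assert (Ht : cos t = 2 * cos a * cos a - 1)
      by (rewrite <- cos_2a_cos; unfold t, a, th; f_equal; fold K; field; unfold K; lra).
    replace (cos a ^ 2) with ((cos t + 1) / 2) by (rewrite Ht; field).
    rewrite Rmult_0_l, cos_0. field. auto. }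
  unfold K; rewrite E, H4, H3, !Phi_0 by lia.
  unfold e. destruct (Nat.eqb (k mod 4) 1); unfold K; field.
Qed.
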